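(* For all $n\ge0$, \[ p_n^2=p_n+2\sum_{k=0}^{n-5}\sum_{r=5}^{n-k}c_{r-5}p_k p_{n-k-r}^2 . \]
   Context: The Narayana's cows numbers $c_n$ are defined by $c_n=\delta_{n,0}+c_{n-1}+c_{n-3}$ for $n\ge0$, $c_n=0$ for $n<0$. The Padovan numbers $p_n$ are defined by $p_n=\delta_{n,0}+p_{n-2}+p_{n-3}$ for $n\ge0$, $p_n=0$ for $n<0$. $\delta_{i,j}$ is $1$ if $i=j$ and $0$ otherwise. Empty sums are $0$. *)

(* Defs.v *)
From mathcomp Require Import all_boot.
Set Implicit Arguments. Unset Strict Implicit. Unset Printing Implicit Defensive.

(* Narayana's cows numbers: c_n = [n=0] + c_{n-1} + c_{n-3}, c_n = 0 for n<0.
   Unfolded: c_0 = 1, c_1 = 1, c_2 = 1, c_{n+3} = c_{n+2} + c_n. *)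
Fixpoint cows (n : nat) : nat :=
  match n with
  | 0 => 1
  | 1 => 1
  | 2 => 1
  | ((m.+1 as k).+1 as j).+1 => cows j + cows m
  end.

(* Padovan numbers: p_n = [n=0] + p_{n-2} + p_{n-3}, p_n = 0 for n<0.
   Unfolded: p_0 = 1, p_1 = 0, p_2 = 1, p_{n+3} = p_{n+1} + p_n. *)
Fixpoint padovan (n : nat) : nat :=
  match n with
  | 0 => 1
  | 1 => 0
  | 2 => 1
  | ((m.+1 as k).+1 as j).+1 => padovan k + padovan m
  end.

Lemma cows_rec n : cows n.+3 = cows n.+2 + cows n. Proof. by []. Qed.
Lemma padovan_rec n : padovan n.+3 = padovan n.+1 + padovan n. Proof. by []. Qed.

(* Main.v *)
Require Import Defs.
From mathcomp Require Import all_boot.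
From mathcomp Require Import zify.

Definition conv (f g : nat -> nat) n := \sum_(0 <= j < n.+1) f j * g (n - j).

Lemma conv_rec f g a b c n :
  (forall j, f j.+3 = a * f j.+2 + b * f j.+1 + c * f j) ->
  f 1 = a * f 0 -> f 2 = a * f 1 + b * f 0 ->
  conv f g n.+3 = a * conv f g n.+2 + b * conv f g n.+1 + c * conv f g n + f 0 * g n.+3.
Proof.
move=> fr f1 f2.
set S2 := \sum_(0 <= i < n.+1) f i.+2 * g (n - i).
set S1 := \sum_(0 <= i < n.+1) f i.+1 * g (n - i).
set S0 := \sum_(0 <= i < n.+1) f i * g (n - i).
have E3 : conv f g n.+3 = f 0 * g n.+3 + f 1 * g n.+2 + f 2 * g n.+1 + (a * S2 + b * S1 + c * S0).
  rewrite /conv big_nat_recl // big_nat_recl // big_nat_recl //.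
  under eq_bigr => i _ do rewrite fr !subSS !mulnDl -!mulnA.
  rewrite !big_split /= -!big_distrr /= !addnA; done.
have E2 : conv f g n.+2 = f 0 * g n.+2 + f 1 * g n.+1 + S2.
  rewrite /conv big_nat_recl // big_nat_recl //.
  under eq_bigr => i _ do rewrite !subSS.
  by rewrite !addnA.
have E1 : conv f g n.+1 = f 0 * g n.+1 + S1.
  rewrite /conv big_nat_recl //.
rewrite E3 E2 E1 /conv -/S0 f2 f1 !mulnDl !mulnDr !mulnA; lia.
Qed.

Definition q n := padovan n ^ 2.
Definition A := conv padovan q.
Definition D := conv cows A.

Lemma A_rec n : A n.+3 = A n.+1 + A n + q n.+3.
Proof.
rewrite /A (@conv_rec _ _ 0 1 1) //; first by rewrite /= !mul1n mul0n.
by move=> j; rewrite padovan_rec; lia.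
Qed.

Lemma D_rec n : D n.+3 = D n.+2 + D n + A n.+3.
Proof.
rewrite /D (@conv_rec _ _ 1 0 1) //; first by rewrite /= !mul1n mul0n addn0.
by move=> j; rewrite cows_rec; lia.
Qed.

Lemma q_id n : q n.+4.+2 + q n.+2 + q n = q n.+4.+1 + q n.+4 + q n.+3 + q n.+1.
Proof.
rewrite /q !padovan_rec.
set x := padovan n; set y := padovan n.+1; set z := padovan n.+2.
rewrite !expnS !expn0; nia.
Qed.

Definition P n := q n.+4.+1 = padovan n.+4.+1 + 2 * D n.

Lemma keyall n : P n /\ P n.+1 /\ P n.+2 /\ P n.+3 /\ P n.+4 /\ P n.+4.+1.
Proof.
elim: n => [|n [H0 [H1 [H2 [H3 [H4 H5]]]]]].
  rewrite /P /D /A /conv /q; rewrite unlock; vm_compute; tauto.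
do 5 (split; first assumption).
move: H0 H1 H2 H3 H4 H5; rewrite /P.
have e1 := D_rec n.+3. have e2 := A_rec n.+3. have e3 := D_rec n.+1.
have e4 := D_rec n. have e5 := q_id n.+4.+1.
have p1 := padovan_rec n.+4.+4. have p2 := padovan_rec n.+4.+3.
have p3 := padovan_rec n.+4.+2. have p4 := padovan_rec n.+4.+1.
lia.
Qed.

Lemma tri N (F : nat -> nat -> nat) :
  \sum_(0 <= i < N.+1) \sum_(0 <= j < (N - i).+1) F i j =
  \sum_(0 <= j < N.+1) \sum_(0 <= i < (N - j).+1) F i j.
Proof.
have h : forall G : nat -> nat -> nat,
    \sum_(0 <= i < N.+1) \sum_(0 <= j < (N - i).+1) G i j =
    \sum_(0 <= i < N.+1) \sum_(0 <= j < N.+1) (if i + j <= N then G i j else 0).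
  move=> G; apply: eq_big_nat => i /andP[_ hi].
  rewrite (@big_nat_widen _ _ _ 0 (N - i).+1 N.+1); last lia.
  rewrite big_mkcond; apply: eq_big_nat => j /andP[_ hj] /=.
  by have -> : (j < (N - i).+1) = (i + j <= N) by lia.
rewrite h (h (fun j i => F i j)) exchange_big_nat.
apply: eq_bigr => j _; apply: eq_bigr => i _; by rewrite addnC.
Qed.

Lemma S_eq N :
  \sum_(0 <= k < N.+4.+1 - 4)
     \sum_(5 <= r < (N.+4.+1 - k).+1)
        cows (r - 5) * padovan k * padovan (N.+4.+1 - k - r) ^ 2 = D N.
Proof.
rewrite (_ : N.+4.+1 - 4 = N.+1); last lia.
rewrite /D /conv.
under [RHS]eq_bigr => j _ do rewrite big_distrr /=.
rewrite -tri.
apply: eq_big_nat => k /andP[_ hk].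
rewrite -{1}(add0n 5) big_addn.
rewrite (_ : (N.+4.+1 - k).+1 - 5 = (N - k).+1); last lia.
apply: eq_bigr => j _.
rewrite addnK (_ : N.+4.+1 - k - (j + 5) = N - j - k); last lia.
by rewrite /q mulnA.
Qed.

(* sum over 0 <= k <= n-5 (empty when n < 5) and 5 <= r <= n-k *)
Theorem mainTheorem17 (n : nat) :
  padovan n ^ 2 =
  padovan n + 2 * \sum_(0 <= k < n - 4)
                    \sum_(5 <= r < (n - k).+1)
                       cows (r - 5) * padovan k * padovan (n - k - r) ^ 2.
Proof.
case: n => [|[|[|[|[|N]]]]]; try by rewrite big_geq.
rewrite S_eq; by case: (keyall N).
Qed.
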